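(* Let $N$ be an augmented network containing $G_{\mathrm{UN}}$. Suppose $\Gamma_1,\Gamma_2$ are distinct minimal edge-cuts of $N$, each consisting only of external Steiner edges. If there is a component $C$ of $G_{\mathrm{UN}}$ such that every edge in $\Gamma_1\cup\Gamma_2$ is incident to (has an endpoint in) $C$, then $\Gamma_1\cap\Gamma_2=\emptyset$.
   Context: All graphs are finite, simple and undirected. The vertex-connectivity $c(G)$ is the minimum number of vertices whose removal yields a disconnected or trivial graph, with $c(K_n)=n-1$ and the convention $c(K_1)=c(K_2)=2$; $G$ is $2$-connected if $c(G)\ge2$. An edge-cut of a graph $G$ is a set $E$ of edges such that $G-E$ has strictly more components than $G$; it is minimal if minimal by inclusion. Setting: $X$ is a set of terminals and $S$ a set of at most $k$ Steiner points; $\Delta=5$ or $7$ according as $1<p<\infty$ or $p\in\{1,\infty\}$. A Steiner edge is an edge incident to a Steiner point; it is external if its other endpoint is a terminal. $G_{\mathrm{UN}}$ is a fixed graph with vertex set $X\cup S$ containing no Steiner edges, with $b(G_{\mathrm{UN}})\le \Delta k$, where $b$ counts leaf blocks plus twice isolated blocks (blocks = maximal $2$-connected subgraphs, including isolated vertices; a leaf block contains exactly one cut-vertex, an isolated block none). An augmented network containing $G_{\mathrm{UN}}$ is a $2$-connected graph obtained from $G_{\mathrm{UN}}$ by adding Steiner edges. *)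

(* Defs.v *)
(* finite simple graphs on a finite vertex type T.
   A graph is given by a vertex set A : {set T} and an edge set
   F : {set {set T}} (each edge an unordered pair = 2-element set). *)
From mathcomp Require Import all_boot.
Set Implicit Arguments. Unset Strict Implicit. Unset Printing Implicit Defensive.

Section Graphs.
Variable T : finType.
Implicit Types (A : {set T}) (F E : {set {set T}}) (x y v : T).

Definition simple_edges F : bool := [forall e in F, #|e| == 2].

Definition adj_on A F : rel T :=
  fun x y => [&& x \in A, y \in A & [set x; y] \in F].

Definition comps_on A F : {set {set T}} :=
  [set [set y in A | connect (adj_on A F) x y] | x in A].

Definition ncomp A F : nat := #|comps_on A F|.

Definition connected_on A F : bool :=
  [forall x in A, forall y in A, connect (adj_on A F) x y].

(* vertex-connectivity at least 2, with c(K_1) = c(K_2) = 2 and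
   c(K_n) = n - 1: a graph with >= 3 vertices is 2-connected iff it is
   connected and stays connected after deleting any single vertex;
   a graph on 1 or 2 vertices is 2-connected iff it is connected. *)
Definition two_connected A F : bool :=
  [&& 0 < #|A|, connected_on A F &
      (#|A| <= 2) || [forall v in A, connected_on (A :\ v) F]].

Definition subgraph E A F : bool :=
  (F \subset E) && [forall e in F, e \subset A].

(* blocks: maximal 2-connected subgraphs (including isolated vertices) *)
Definition is_block E A F : bool :=
  [&& subgraph E A F, two_connected A F &
      [forall A' : {set T}, forall F' : {set {set T}},
         [&& subgraph E A' F', two_connected A' F', A \subset A'
           & F \subset F'] ==> (A' == A) && (F' == F)]].

Definition cut_vertex E v : bool :=
  ncomp [set: T] E < ncomp (setT :\ v) E.

Definition cut_vertices E : {set T} := [set v | cut_vertex E v].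

Definition blocks E : {set {set T} * {set {set T}}} :=
  [set AF | is_block E AF.1 AF.2].

Definition leaf_blocks E := [set AF in blocks E | #|AF.1 :&: cut_vertices E| == 1].
Definition isolated_blocks E := [set AF in blocks E | #|AF.1 :&: cut_vertices E| == 0].

Definition bval E : nat := #|leaf_blocks E| + 2 * #|isolated_blocks E|.

Definition edge_cut E (G : {set {set T}}) : bool :=
  (G \subset E) && (ncomp [set: T] E < ncomp [set: T] (E :\: G)).

Definition minimal_edge_cut E (G : {set {set T}}) : Prop :=
  edge_cut E G /\ forall G' : {set {set T}}, G' \proper G -> ~~ edge_cut E G'.

(* Steiner points are S = ~: X (vertex set is X ∪ S, disjoint union) *)
Definition steiner_edge (X : {set T}) (e : {set T}) : bool := e :&: ~: X != set0.
Definition external_steiner_edge (X : {set T}) (e : {set T}) : bool :=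
  (e :&: ~: X != set0) && (e :&: X != set0).

End Graphs.

(* Main.v *)
Require Import Defs.
From mathcomp Require Import all_boot.
Set Implicit Arguments. Unset Strict Implicit. Unset Printing Implicit Defensive.

Section H.
Variable T : finType.

Lemma connect_inv (e e' : rel T) (P : pred T) x z :
 (forall a b, P a -> e a b -> P b && e' a b) -> P x -> connect e x z -> P z && connect e' x z.
Proof.
move=> H Px /connectP [p pth ->]. elim: p x Px pth => [|b p IH] a Pa /=; first by rewrite Pa connect0.
case/andP=> eab pth. case/andP: (H a b Pa eab) => Pb e'ab.
case/andP: (IH b Pb pth) => -> cb. by rewrite (connect_trans (connect1 e'ab) cb).
Qed.

Lemma adj_sym (A : {set T}) F : symmetric (adj_on A F).
Proof. move=> x y; rewrite /adj_on (setUC [set x]); by case: (x \in A); case: (y \in A). Qed.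

Lemma csym (A : {set T}) F x y : connect (adj_on A F) x y = connect (adj_on A F) y x.
Proof. exact: (sym_connect_sym (adj_sym A F)). Qed.

Lemma ncomp_le1 E (x : T) : (forall y, connect (adj_on setT E) x y) -> ncomp setT E <= 1.
Proof.
move=> H. rewrite /ncomp -(cards1 (setT : {set T})). apply subset_leq_card.
apply/subsetP => D /imsetP [z _ ->]. rewrite in_set1. apply/eqP/setP => y. rewrite !inE.
apply: connect_trans (H y). by rewrite csym.
Qed.

Lemma ncomp_ge2 E (x y : T) : ~~ connect (adj_on setT E) x y -> 1 < ncomp setT E.
Proof.
move=> nc. pose Cx := [set z in setT | connect (adj_on setT E) x z].
pose Cy := [set z in setT | connect (adj_on setT E) y z].
have neq : Cx != Cy.
  apply/negP => /eqP e. have : y \in Cy by rewrite !inE connect0.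
  by rewrite -e !inE (negbTE nc).
rewrite /ncomp. apply: (@leq_trans #|[set Cx; Cy]|); first by rewrite cards2 neq.
apply subset_leq_card. apply/subsetP => D. rewrite !inE => /orP [] /eqP ->.
  by apply/imsetP; exists x.
by apply/imsetP; exists y.
Qed.

Definition comp (E : {set {set T}}) (x : T) := [set y | connect (adj_on setT E) x y].
Definition delta (E : {set {set T}}) (D : {set T}) := [set f in E | (f :&: D != set0) && ~~ (f \subset D)].

Lemma pair_eq (f : {set T}) u v : #|f| = 2 -> u \in f -> v \in f -> u != v -> f = [set u; v].
Proof.
move=> cf uf vf uv. apply/esym/eqP. rewrite eqEcard cf cards2 uv andbT.
by apply/subsetP => z; rewrite !inE => /orP [] /eqP ->.
Qed.

Lemma cut_delta E G x : simple_edges E -> connected_on setT E -> minimal_edge_cut E G ->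
  G = delta E (comp (E :\: G) x).
Proof.
move=> se ce [ecG minG]. set D := comp (E :\: G) x.
have dG : delta E D \subset G.
  apply/subsetP => f. rewrite inE => /and3P [fE /set0Pn [u] ] .
  rewrite inE => /andP [uf uD] /subsetPn [v vf vD].
  apply/negPn/negP => fG.
  have uv : u != v by apply/negP => /eqP e; move: vD; rewrite -e uD.
  have ff : f = [set u; v] by apply: pair_eq => //; apply/eqP; move/forallP: se => /(_ f); rewrite fE.
  move: uD vD; rewrite !inE => uD; apply/negP/negPn.
  apply: connect_trans uD (connect1 _). by rewrite /adj_on !inE -ff fE fG.
have [y ny] : exists y, y \notin D.
  apply/existsP. rewrite -negb_forall. apply/negP => /forallP H.
  case/andP: ecG => _ lt.
  have h1 : ncomp setT (E :\: G) <= 1 by apply: (ncomp_le1 (x:=x)) => z; have := H z; rewrite inE.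
  have h0 : 0 < ncomp setT E.
    by apply/card_gt0P; exists [set z in setT | connect (adj_on setT E) x z]; apply/imsetP; exists x.
  by move: (leq_trans lt h1); rewrite ltnS leqNgt h0.
have ec : edge_cut E (delta E D).
  rewrite /edge_cut. apply/andP; split; first by apply/subsetP=> f; rewrite inE => /andP [].
  apply: leq_trans (ncomp_ge2 (x:=x) (y:=y) _).
    apply: (ncomp_le1 (x:=x)) => z. move: ce => /forallP /(_ x); rewrite in_setT /= => /forallP /(_ z).
    by rewrite in_setT.
  apply/negP => cxy.
  have : (y \in D) && connect (adj_on setT (E :\: delta E D)) x y.
    apply: (connect_inv (P := fun z => z \in D) _ _ cxy); last by rewrite inE connect0.
    move=> a b aD ab. move: (ab); rewrite /adj_on => /and3P [_ _]. rewrite in_setD => /andP [nd abE].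
    have bD : b \in D.
      apply/negPn/negP => bD. move: nd; rewrite /delta in_set abE /=. apply/negP/negPn/andP; split.
        by apply/set0Pn; exists a; rewrite in_setI aD !inE eqxx.
      by apply/subsetPn; exists b; rewrite ?bD // !inE eqxx orbT.
    by rewrite bD /= !in_setT nd abE.
  by rewrite (negbTE ny).
apply/eqP. rewrite eqEsubset dG andbT.
by apply/negPn/negP => nGd; move: (minG (delta E D)); rewrite properE dG nGd ec => /(_ isT).
Qed.
Lemma side (E G1 G2 : {set {set T}}) (C : {set T}) s c :
  (forall f, f \in G2 -> f :&: C != set0) ->
  c \in C -> ~~ connect (adj_on setT (E :\: G1)) s c ->
  (forall z, z \in C -> connect (adj_on setT (E :\: G1)) c z) ->
  forall y, connect (adj_on setT (E :\: G1)) s y -> connect (adj_on setT (E :\: G2)) s y.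
Proof.
move=> meet cC nsc Cc.
have CB z : z \in C -> ~~ connect (adj_on setT (E :\: G1)) s z.
  move=> zC; apply/negP => sz; move/negP: nsc; apply.
  by apply: connect_trans sz _; rewrite csym; apply: Cc.
move=> y sy.
suff H : forall a b, connect (adj_on setT (E :\: G1)) s a -> adj_on setT (E :\: G1) a b ->
   connect (adj_on setT (E :\: G1)) s b && adj_on setT (E :\: G2) a b.
  by case/andP: (connect_inv (P := connect (adj_on setT (E :\: G1)) s) H (connect0 _ s) sy).
move=> a b sa ab. rewrite (connect_trans sa (connect1 ab)) /=.
move: (ab); rewrite /adj_on !in_setT /= in_setD => /andP [_ abE]; rewrite in_setD abE andbT.
apply/negP => abG. case/set0Pn: (meet _ abG) => z. rewrite in_setI => /andP [].
rewrite !inE => /orP [] /eqP -> zC; move/negP: (CB _ zC); apply => //.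
exact: (connect_trans sa (connect1 ab)).
Qed.
End H.

Theorem lemma7 (T : finType) (X : {set T}) (k Delta : nat)
  (E0 EN : {set {set T}}) (G1 G2 : {set {set T}}) (C : {set T}) :
  #|~: X| <= k ->
  (Delta = 5 \/ Delta = 7) ->
  simple_edges E0 ->
  (forall e, e \in E0 -> ~~ steiner_edge X e) ->
  bval E0 <= Delta * k ->
  simple_edges EN ->
  E0 \subset EN ->
  (forall e, e \in EN :\: E0 -> steiner_edge X e) ->
  two_connected [set: T] EN ->
  minimal_edge_cut EN G1 -> minimal_edge_cut EN G2 -> G1 != G2 ->
  (forall e, e \in G1 -> external_steiner_edge X e) ->
  (forall e, e \in G2 -> external_steiner_edge X e) ->
  C \in comps_on [set: T] E0 ->
  (forall e, e \in G1 :|: G2 -> e :&: C != set0) ->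
  G1 :&: G2 = set0.
Proof.
move=> _ _ _ nst0 _ seN sub0 _ tc m1 m2 neq ext1 ext2 Ccomp meet.
have ceN : connected_on setT EN by case/and3P: tc.
apply/eqP; apply/negPn/negP => /set0Pn [e]; rewrite in_setI => /andP [e1 e2].
case/set0Pn: (meet e ltac:(by rewrite in_setU e1)) => c; rewrite in_setI => /andP [ec cC].
have eEN : e \in EN by case: m1 => /andP [/subsetP H _] _; apply: H.
have e2c : #|e| = 2 by apply/eqP; move/forallP: seN => /(_ e); rewrite eEN.
have /card_gt0P [s] : 0 < #|e :\ c| by rewrite lt0n; apply/eqP => h0; move: (cardsD1 c e); rewrite ec e2c h0 => /eqP.
rewrite !inE => /andP [sc es].
have eeq : e = [set s; c] by apply: pair_eq.
case/imsetP: Ccomp => x0 _ CE.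
have facts G : minimal_edge_cut EN G -> (forall f, f \in G -> external_steiner_edge X f) -> e \in G ->
   G = delta EN (comp (EN :\: G) s) /\ ~~ connect (adj_on setT (EN :\: G)) s c /\
   (forall z, z \in C -> connect (adj_on setT (EN :\: G)) c z).
  move=> mG extG eG. have GD := cut_delta s seN ceN mG.
  split => //; split.
    apply/negP => sc'. move: eG; rewrite {1}GD inE => /and3P [_ _ /negP]; apply.
    apply/subsetP => z; rewrite eeq !inE => /orP [] /eqP ->; first by rewrite connect0.
    done.
  move=> z zC.
  have cz : connect (adj_on setT E0) c z.
    move: zC cC; rewrite CE !inE => xz xc. by apply: connect_trans xz; rewrite csym.
  apply: connect_sub cz => a b; rewrite /adj_on => /and3P [_ _ abE]; apply: connect1.
  rewrite !in_setT in_setD (subsetP sub0 _ abE) andbT /=.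
  apply/negP => abG. move: (nst0 _ abE) (extG _ abG); rewrite /steiner_edge /external_steiner_edge.
  by move=> /negbTE ->.
case: (facts _ m1 ext1 e1) => D1 [n1 c1].
case: (facts _ m2 ext2 e2) => D2 [n2 c2].
have m1' f : f \in G1 -> f :&: C != set0 by move=> fG; apply: meet; rewrite in_setU fG.
have m2' f : f \in G2 -> f :&: C != set0 by move=> fG; apply: meet; rewrite in_setU fG orbT.
have eqB : comp (EN :\: G1) s = comp (EN :\: G2) s.
  apply/setP => y; rewrite !inE; apply/idP/idP.
    exact: (side m2' cC n1 c1).
  exact: (side m1' cC n2 c2).
by move/negP: neq; apply; rewrite D1 D2 eqB.
Qed.
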